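(* Let $\gamma:K^*\to K$ be a non-degenerate simplicial dynamical system on a polyhedron $X=X(K)$ of positive dimension $d$. For $s^*\in K^*$ let $\bar g_{s^*}:\gamma(s^* )\to s^*$ be the affine isomorphism inverse to the restriction to $s^*$ of the p.l. map $g$ associated with $\gamma$. Then for all $x_1,x_2$ in the simplex $\gamma(s^* )$, $$d_K(\bar g_{s^*}(x_1),\bar g_{s^*}(x_2))\le\left(1-\frac{\theta(K^*,K)}{d}\right)d_K(x_1,x_2).$$
   Context: $K$ is a simplicial complex with vertex set $V(K)$; each $x\in X(K)$ has barycentric coordinates $b_v(x)\ge0$, $v\in V(K)$, summing to $1$, with $x=\sum_vb_v(x)v$ and $\{v:b_v(x)>0\}$ spanning a simplex of $K$. The metric $d_K(x,y)=\sum_{v\in V(K)}|b_v(x)-b_v(y)|$. A subdivision $K^*$ of $K$ is a triangulation of the same polyhedron in which every simplex of $K$ is a union of simplices of $K^*$; it is proper if no simplex of $K^*$ meets two disjoint simplices of $K$. A simplicial dynamical system is a simplicial map $\gamma:K^*\to K$ (vertex map sending vertex sets of simplices onto vertex sets of simplices) with $K^*$ a proper subdivision of $K$; it is non-degenerate if $\dim\gamma(s^* )=\dim s^*$ for all $s^*\in K^*$ (i.e. $\gamma$ is injective on the vertices of each simplex). The associated p.l. map is $g(x)=\sum_{v\in V(K^* )}b^*_v(x)\gamma(v)$ with $b^*$ the $K^*$ barycentric coordinates. $\theta(K^*,K)=\min\{b_v(v^* ):v^*\in V(K^* ),v\in V(K),b_v(v^* )>0\}$. The dimension $d$ of $X$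 is the maximal dimension of a simplex of $K$. *)

(* Defs.v *)
From HB Require Import structures.
From mathcomp Require Import all_boot all_order all_algebra.
Set Implicit Arguments. Unset Strict Implicit. Unset Printing Implicit Defensive.
Import Order.TTheory GRing.Theory Num.Theory.
Local Open Scope ring_scope.

Definition supp (R : numDomainType) (T : finType) (f : T -> R) : {set T} :=
  [set t | f t != 0].

Definition is_complex (T : finType) (K : {set {set T}}) : Prop :=
  (forall s, s \in K -> s != set0) /\
  (forall s s' : {set T}, s \in K -> s' \subset s -> s' != set0 -> s' \in K) /\
  (forall v : T, [set v] \in K).

Definition bary (R : numDomainType) (T : finType) (S : {set T}) (f : T -> R) : Prop :=
  (forall t, 0 <= f t) /\ \sum_t f t = 1 /\ supp f \subset S.

(* x is (the barycentric coordinate vector of) a point of X(K) *)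
Definition inX (R : numDomainType) (T : finType) (K : {set {set T}}) (x : T -> R) : Prop :=
  (forall t, 0 <= x t) /\ \sum_t x t = 1 /\ supp x \in K.

Definition dK (R : numDomainType) (V : finType) (x y : V -> R) : R :=
  \sum_v `|x v - y v|.

(* the point of X(K) with K*-barycentric coordinates c; the vertex w of K*
   is the point of X(K) with K-barycentric coordinates p w *)
Definition realize (R : numDomainType) (V W : finType) (p : W -> V -> R) (c : W -> R)
  : V -> R := fun v => \sum_w c w * p w v.

Definition is_subdivision (R : numDomainType) (V W : finType)
  (K : {set {set V}}) (Ks : {set {set W}}) (p : W -> V -> R) : Prop :=
  [/\ is_complex K /\ is_complex Ks,
      (forall c, inX Ks c -> inX K (realize p c)),
      (forall x, inX K x -> exists c, inX Ks c /\ realize p c =1 x),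
      (forall c1 c2, inX Ks c1 -> inX Ks c2 -> realize p c1 =1 realize p c2 -> c1 =1 c2)
    &
      (forall s, s \in K -> exists T : {set {set W}}, T \subset Ks /\
         forall x : V -> R, bary s x <->
           (exists t, t \in T /\ exists c, bary t c /\ realize p c =1 x))].

Definition proper_subdivision (R : numDomainType) (V W : finType)
  (K : {set {set V}}) (Ks : {set {set W}}) (p : W -> V -> R) : Prop :=
  forall t s1 s2, t \in Ks -> s1 \in K -> s2 \in K -> [disjoint s1 & s2] ->
    ~ ((exists c, bary t c /\ bary s1 (realize p c)) /\
       (exists c, bary t c /\ bary s2 (realize p c))).

Definition simplicial (V W : finType) (Ks : {set {set W}}) (K : {set {set V}})
  (gam : W -> V) : Prop := forall t, t \in Ks -> gam @: t \in K.

Definition nondegenerate_map (V W : finType) (Ks : {set {set W}}) (gam : W -> V) : Prop :=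
  forall t, t \in Ks -> #|gam @: t| = #|t|.

(* K-barycentric coordinates of g(x) where x has K*-coordinates c:
   g(x) = sum_w c_w gam(w) *)
Definition gimage (R : numDomainType) (V W : finType) (gam : W -> V) (c : W -> R)
  : V -> R := fun v => \sum_(w | gam w == v) c w.

(* theta(K*,K) = min { b_v(w) : w vertex of K*, v vertex of K, b_v(w) > 0 };
   the initial value 1 is harmless since all such b_v(w) are <= 1 *)
Definition theta (R : realFieldType) (V W : finType) (p : W -> V -> R) : R :=
  \big[Num.min/1]_(w : W) \big[Num.min/1]_(v : V | 0 < p w v) p w v.

Definition dimK (V : finType) (K : {set {set V}}) : nat :=
  (\max_(s in K) #|s|).-1.

(* Main.v *)
Require Import Defs.
From HB Require Import structures.
From mathcomp Require Import all_boot all_order all_algebra.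
From mathcomp Require Import ring lra.
Import Order.TTheory GRing.Theory Num.Theory.
Local Open Scope ring_scope.

Lemma theta_le (R : realFieldType) (V W : finType) (p : W -> V -> R) w v :
  0 < p w v -> theta p <= p w v.
Proof.
move=> h; rewrite /theta.
apply: le_trans (bigmin_le 1 w _) _.
exact: bigmin_le_cond.
Qed.

Lemma theta_le1 (R : realFieldType) (V W : finType) (p : W -> V -> R) :
  theta p <= 1.
Proof. exact: bigmin_le_id. Qed.

Lemma abs_key (R : realFieldType) (a b r rr e : R) :
  e <= a -> e <= - b -> `|r| <= rr -> `|a + b + r| <= a - b + rr - 2 * e.
Proof.
move=> h1 h2 h3.
have h4 := ler_norm r.
have h5 : -r <= `|r| by rewrite -normrN ler_norm.
case: (lerP 0 (a+b+r)) => h; [rewrite ger0_norm // | rewrite ltr0_norm //]; lra.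
Qed.

Lemma max0E (R : realFieldType) (x : R) : Num.max x 0 = if 0 <= x then x else 0.
Proof. case: ler0P => h; case: lerP => h' //. by apply/eqP; rewrite eq_le h h'. by move: (lt_trans h' h); rewrite ltxx. Qed.

Lemma normr_max (R : realFieldType) (x : R) : `|x| = 2 * Num.max x 0 - x.
Proof. rewrite max0E; case: (lerP 0 x) => h; [rewrite ger0_norm //| rewrite ltr0_norm //]; ring. Qed.

Lemma maxN0 (R : realFieldType) (x : R) : Num.max (- x) 0 = Num.max x 0 - x.
Proof. rewrite !max0E; case: (lerP 0 x) => h; case: (lerP 0 (-x)) => h'; lra. Qed.

Lemma sum_out {R : realFieldType} {W : finType} {t : {set W}} (F : W -> R) :
  (forall w, w \notin t -> F w = 0) -> \sum_w F w = \sum_(w in t) F w.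
Proof.
move=> h; rewrite (bigID (mem t)) /= [X in _ + X]big1 ?addr0 //.
Qed.

Lemma posbound {R : realFieldType} {W : finType} {t : {set W}} {d : W -> R} {wM w0} :
  (forall w, w \notin t -> d w = 0) -> w0 \in t -> d w0 <= 0 ->
  (forall w, w \in t -> d w <= d wM) ->
  \sum_w Num.max (d w) 0 <= (#|t|.-1)%:R * Num.max (d wM) 0.
Proof.
move=> hout h0t h0 hM.
rewrite (sum_out (t:=t)); last by move=> w /hout ->; rewrite max0E lexx.
rewrite (big_setD1 _ h0t) /= {1}max0E.
have -> : (if 0 <= d w0 then d w0 else 0) = 0.
  by case: ifP => h //; apply/eqP; rewrite eq_le h h0.
rewrite add0r.
apply: le_trans (ler_sum _ (G := fun _ => Num.max (d wM) 0) _) _.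
  move=> w /setD1P [_ hw]; apply: le_max2 => //; exact: hM.
rewrite sumr_const mulr_natl.
have -> : #|t :\ w0| = #|t|.-1 by rewrite (cardsD1 w0 t) h0t.
by [].
Qed.

Lemma minle0 {R : realFieldType} {W : finType} {t : {set W}} {d : W -> R} {w0} :
  (forall w, w \notin t -> d w = 0) -> \sum_w d w = 0 -> w0 \in t ->
  (forall w, w \in t -> d w0 <= d w) -> d w0 <= 0.
Proof.
move=> hout hs h0t hm.
have : \sum_(w in t) d w0 <= \sum_(w in t) d w by apply: ler_sum.
rewrite -(sum_out _ hout) hs sumr_const.
have : (0 < #|t|)%N by apply/card_gt0P; exists w0.
case: #|t| => // n _; rewrite mulrS => h.
have : 0 <= d w0 *+ n \/ d w0 <= 0.
  case: (lerP (d w0) 0) => h1; [by right| left; apply: mulrn_wge0; exact: ltW].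
case=> // h2. lra.
Qed.

Definition ev (R : realFieldType) {W : finType} (w : W) : W -> R := fun w' => (w' == w)%:R.

Lemma realize_e (R : realFieldType) (V W : finType) (p : W -> V -> R) w v :
  realize p (ev R w) v = p w v.
Proof.
rewrite /realize (bigD1 w) //= /ev eqxx mul1r big1 ?addr0 // => w' /negbTE ->.
by rewrite mul0r.
Qed.

Lemma supp_e (R : realFieldType) (W : finType) (w : W) : supp (ev R w) = [set w].
Proof.
apply/setP => x; rewrite !inE /ev; case: (x =P w) => _ /=; by rewrite ?oner_eq0 ?eqxx.
Qed.

Lemma bary_e (R : realFieldType) {W : finType} {t : {set W}} {w : W} :
  w \in t -> bary t (ev R w).
Proof.
move=> wt; split; first by move=> x; rewrite /ev ler0n.
split; last by rewrite supp_e sub1set.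
rewrite (bigD1 w) //= /ev eqxx big1 ?addr0 // => w' /negbTE ->; done.
Qed.

Lemma inX_e (R : realFieldType) (W : finType) (Ks : {set {set W}}) (w : W) :
  is_complex Ks -> inX Ks (ev R w).
Proof.
move=> [_ [_ h]]; have [h1 [h2 _]] := bary_e R (in_setT w).
by split => //; split => //; rewrite supp_e.
Qed.

Theorem proposition4p8 (R : realFieldType) (V W : finType)
  (K : {set {set V}}) (Ks : {set {set W}}) (p : W -> V -> R) (gam : W -> V) :
  is_subdivision K Ks p -> proper_subdivision K Ks p ->
  simplicial Ks K gam -> nondegenerate_map Ks gam ->
  (0 < dimK K)%N ->
  forall t, t \in Ks ->
  forall y1 y2 : V -> R, bary (gam @: t) y1 -> bary (gam @: t) y2 ->
  forall c1 c2 : W -> R, bary t c1 -> bary t c2 ->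
  gimage gam c1 =1 y1 -> gimage gam c2 =1 y2 ->
  (* realize p c_i = gbar_t (y_i) *)
  dK (realize p c1) (realize p c2) <= (1 - theta p / (dimK K)%:R) * dK y1 y2.
Proof.
move=> [[cK cKs] hin hcov huniq hunion] hprop hsimp hnd hd t tKs y1 y2 hy1 hy2
  c1 c2 [c1p [c1s c1t]] [c2p [c2s c2t]] hg1 hg2.
set d := (dimK K)%:R : R.
have dpos : 0 < d by rewrite ltr0n.
set del := fun w => c1 w - c2 w.
have hout : forall w, w \notin t -> del w = 0.
  move=> w wt; rewrite /del.
  have z : forall c : W -> R, supp c \subset t -> c w = 0.
    move=> c /subsetP hs; apply/eqP; apply: contraNT wt => h; apply: hs.
    by rewrite inE.
  by rewrite (z _ c1t) (z _ c2t) subrr.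
have hsum : \sum_w del w = 0 by rewrite /del sumrB c1s c2s subrr.
have hinj : {in t &, injective gam} by apply/imset_injP; rewrite hnd.
have hn : (#|t| <= (dimK K).+1)%N.
  rewrite -hnd // /dimK prednK //.
  - exact: (@leq_bigmax_cond _ (fun s => s \in K) (fun s => #|s|) _ (hsimp _ tKs)).
  - by move: hd; rewrite /dimK; case: (\max_(s in K) #|s|)%N.
have pge0 : forall w v, 0 <= p w v.
  by move=> w v; have [h1 _] := hin _ (@inX_e R _ _ w cKs); rewrite -realize_e.
have psum : forall w, \sum_v p w v = 1.
  move=> w; have [_ [h2 _]] := hin _ (@inX_e R _ _ w cKs); rewrite -h2.
  by apply: eq_bigr => v _; rewrite realize_e.
have hy : forall v, y1 v - y2 v = \sum_(w | gam w == v) del w.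
  by move=> v; rewrite -hg1 -hg2 /gimage /del sumrB.
have hdy : \sum_w `|del w| <= dK y1 y2.
  rewrite /dK (sum_out (t:=t)); last by move=> w /hout ->; rewrite normr0.
  have -> : \sum_(w in t) `|del w| = \sum_(v in gam @: t) `|y1 v - y2 v|.
    rewrite big_imset //=; apply: eq_bigr => w wt.
    rewrite hy (bigD1 w) //= big1 ?addr0 // => w' /andP [/eqP hg hne].
    case: (boolP (w' \in t)) => h; last exact: hout.
    by move: hne; rewrite (hinj _ _ h wt hg) eqxx.
  rewrite [X in _ <= X](bigID (mem (gam @: t))) /= lerDl.
  by apply: sumr_ge0 => *; exact: normr_ge0.
have hL : dK (realize p c1) (realize p c2) = \sum_v `|\sum_w del w * p w v|.
  rewrite /dK; apply: eq_bigr => v _; rewrite /realize -sumrB; congr `|_|.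
  by apply: eq_bigr => w _; rewrite /del mulrBl.
have hv : forall v, `|\sum_w del w * p w v| <= \sum_w `|del w| * p w v.
  move=> v; apply: le_trans (ler_norm_sum _ _ _) _; apply: ler_sum => w _.
  by rewrite normrM (ger0_norm (pge0 w v)).
have hexch : \sum_v \sum_w `|del w| * p w v = \sum_w `|del w|.
  by rewrite exchange_big; apply: eq_bigr => w _; rewrite -mulr_sumr psum mulr1.
set P := \sum_w Num.max (del w) 0.
have hP : \sum_w `|del w| = 2 * P.
  under eq_bigr do rewrite normr_max.
  by rewrite sumrB -mulr_sumr hsum subr0.
have hth1 : theta p <= 1 by apply: theta_le1.
have hd1 : 1 <= d by rewrite ler1n.
have hfac : 0 <= 1 - theta p / d.
  rewrite subr_ge0 ler_pdivrMr // mul1r; exact: le_trans hth1 hd1.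
have hdKy0 : 0 <= dK y1 y2 by apply: sumr_ge0 => *; exact: normr_ge0.
have hLle : dK (realize p c1) (realize p c2) <= 2 * P.
  rewrite hL -hP -hexch; apply: ler_sum => v _; exact: hv.
case: (lerP P 0) => hP0.
  apply: le_trans hLle _; apply: le_trans (mulr_ge0 hfac hdKy0); lra.
have [i0 i0t] : exists i0, i0 \in t by apply/set0Pn; exact: cKs.1 _ tKs.
case: (arg_maxP del i0t) => wM wMt hM.
case: (arg_minP del i0t) => wm wmt hm.
have hmle : del wm <= 0 by apply: (minle0 hout hsum wmt) => w /hm.
have hMge : 0 <= del wM.
  rewrite -oppr_le0; apply: (minle0 (d:=fun w => - del w) (t:=t)) => //.
  - by move=> w /hout ->; rewrite oppr0.
  - by rewrite sumrN hsum oppr0.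
  - by move=> w /hM; rewrite lerN2.
have hnd' : (#|t|.-1)%:R <= d by rewrite /d ler_nat; move: hn; case: #|t| => //= n; rewrite ltnS.
have b1 : P <= d * del wM.
  apply: le_trans (posbound hout wmt hmle (fun w h => hM w h)) _.
  rewrite max0E hMge; exact: ler_wpM2r.
have b2 : P <= d * (- del wm).
  have -> : P = \sum_w Num.max (- del w) 0.
    under eq_bigr do rewrite maxN0.
    by rewrite sumrB hsum subr0.
  apply: le_trans (posbound (d:=fun w => - del w) (t:=t) (wM:=wm) _ wMt _ _) _.
  - by move=> w /hout ->; rewrite oppr0.
  - by rewrite oppr_le0.
  - by move=> w /hm /=; rewrite lerN2.
  rewrite max0E oppr_ge0 hmle; apply: ler_wpM2r => //; rewrite oppr_ge0 //.
have hne : wm != wM.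
  apply/eqP => e; move: hmle; rewrite e => h.
  have : del wM = 0 by apply/eqP; rewrite eq_le h hMge.
  move=> h0; rewrite h0 mulr0 in b1; lra.
have vert : forall w, w \in t -> bary (supp (realize p (ev R w))) (realize p (ev R w))
    /\ supp (realize p (ev R w)) \in K.
  move=> w wt; have [h1 [h2 h3]] := hin _ (@inX_e R _ _ w cKs).
  by split => //; split => //; split => //.
have : ~~ [disjoint supp (realize p (ev R wM)) & supp (realize p (ev R wm))].
  apply/negP => hdis.
  have [vM KM] := vert _ wMt; have [vm Km] := vert _ wmt.
  apply: (hprop t _ _ tKs KM Km hdis); split.
  - by exists (ev R wM); split => //; exact: bary_e.
  - by exists (ev R wm); split => //; exact: bary_e.
rewrite -setI_eq0 => /set0Pn [v0]; rewrite !inE !realize_e => /andP [h1 h2].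
have pMpos : 0 < p wM v0 by rewrite lt0r h1 pge0.
have pmpos : 0 < p wm v0 by rewrite lt0r h2 pge0.
have thM := theta_le _ _ _ _ _ _ pMpos.
have thm := theta_le _ _ _ _ _ _ pmpos.
set e := theta p * P / d.
have he1 : e <= del wM * p wM v0.
  rewrite /e ler_pdivrMr //.
  case: (lerP (theta p) 0) => hth.
    apply: (@le_trans _ _ 0); first by rewrite mulr_le0_ge0 // ltW.
    by rewrite mulr_ge0 ?mulr_ge0 // ltW.
  apply: (@le_trans _ _ (theta p * (d * del wM))); first by rewrite ler_pM2l.
  rewrite [X in _ <= X]mulrC [X in _ <= X]mulrCA [X in _ <= X]mulrA mulrC.
  rewrite [X in _ <= X * _]mulrC.
  have hpos : 0 <= d * del wM by rewrite mulr_ge0 // ltW.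
  exact: (ler_wpM2l hpos thM).
have he2 : e <= - (del wm * p wm v0).
  rewrite -mulNr /e ler_pdivrMr //.
  have hmge : 0 <= - del wm by rewrite oppr_ge0.
  case: (lerP (theta p) 0) => hth.
    apply: (@le_trans _ _ 0); first by rewrite mulr_le0_ge0 // ltW.
    by rewrite mulr_ge0 ?mulr_ge0 // ltW.
  apply: (@le_trans _ _ (theta p * (d * - del wm))); first by rewrite ler_pM2l.
  rewrite [X in _ <= X]mulrC [X in _ <= X]mulrCA [X in _ <= X]mulrA mulrC.
  rewrite [X in _ <= X * _]mulrC.
  have hpos : 0 <= d * - del wm by rewrite mulr_ge0 // ltW.
  exact: (ler_wpM2l hpos thm).
have hv0 : `|\sum_w del w * p w v0| <= \sum_w `|del w| * p w v0 - 2 * e.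
  rewrite (bigD1 wM) //= (bigD1 wm) /=; last by rewrite hne.
  rewrite [X in _ <= X - _](bigD1 wM) //= [X in _ <= _ + X - _](bigD1 wm) /=; last by rewrite hne.
  rewrite addrA (ger0_norm hMge) (ler0_norm hmle).
  set r := \sum_(i | _) del i * p i v0.
  set rr := \sum_(i | _) `|del i| * p i v0.
  have hr : `|r| <= rr.
    apply: le_trans (ler_norm_sum _ _ _) _; apply: ler_sum => w _.
    by rewrite normrM (ger0_norm (pge0 w v0)).
  have := abs_key _ _ _ _ _ _ he1 he2 hr.
  lra.
have hLle2 : dK (realize p c1) (realize p c2) <= 2 * P - 2 * e.
  rewrite hL -hP -hexch (bigD1 v0) //= [X in _ <= X - _](bigD1 v0) //=.
  have : \sum_(i | i != v0) `|\sum_w del w * p w i| <= \sum_(i | i != v0) \sum_w `|del w| * p w i.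
    by apply: ler_sum => v _; exact: hv.
  lra.
apply: le_trans hLle2 _.
have -> : 2 * P - 2 * e = (1 - theta p / d) * (2 * P).
  rewrite /e; field; by rewrite gt_eqF.
by apply: (ler_wpM2l hfac); rewrite -hP.
Qed.
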